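(* For $m\ge 2$ there is an injective $\mathcal R$-morphism $g:C_m'\to C_2'$ such that for all $i,j<m$, \[ g(p_i)\cdot g(q_j)=\delta_{i,j}\quad\text{and}\quad p_0\cdot g(q_j)=0=g(p_i)\cdot q_0, \] where $p_i,q_j$ denote the congruence classes of $\{p_i\},\{q_j\}$ in $C_m'$ and in $C_2'$ respectively.
   Context: An $\mathcal R$-dioid is a dioid in which every regular subset of its multiplicative monoid has a supremum $\sum A$ with $\sum(AB)=(\sum A)(\sum B)$ (equivalently a $*$-continuous Kleene algebra); an $\mathcal R$-morphism is a dioid morphism preserving suprema of regular sets; an $\mathcal R$-congruence is a semiring congruence $\rho$ such that regular sets with equal downward closures modulo $\rho$ have congruent suprema. For $k\ge1$, $\Delta_k=\{p_0,\dots,p_{k-1},q_0,\dots,q_{k-1}\}$ and the polycyclic $\mathcal R$-dioid is $C_k'=\mathcal R\Delta_k^*/\rho$, where $\mathcal R\Delta_k^*$ is the algebra of regular languages over $\Delta_k$ and $\rho$ the least $\mathcal R$-congruence containing $p_iq_j=\delta_{i,j}$ for $i,j<k$ ($\delta$ the Kronecker delta). *)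

(* Defs.v *)
From mathcomp Require Import ssreflect ssrfun ssrbool eqtype ssrnat seq fintype.
From Stdlib Require List.


Set Implicit Arguments.
Unset Strict Implicit.
Unset Printing Implicit Defensive.

Inductive star (T : Type) (mul : T -> T -> T) (one : T) (A : T -> Prop)
  : T -> Prop :=
| star_one : star mul one A one
| star_mul x a : star mul one A x -> A a -> star mul one A (mul x a).

Inductive regular (T : Type) (mul : T -> T -> T) (one : T)
  : (T -> Prop) -> Prop :=
| reg_fin (l : list T) : regular mul one (fun x => List.In x l)
| reg_union A B : regular mul one A -> regular mul one B ->
    regular mul one (fun x => A x \/ B x)
| reg_prod A B : regular mul one A -> regular mul one B ->
    regular mul one (fun x => exists a b, A a /\ B b /\ x = mul a b)
| reg_star A : regular mul one A -> regular mul one (star mul one A)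
| reg_ext A B : regular mul one A -> (forall x, A x <-> B x) ->
    regular mul one B.

(* Dioids presented as a carrier with an equivalence (setoid), so that *)
(* quotients D/rho are represented by representatives with equality rho.*)
Record sdioid := SDioid {
  car : Type;
  deq : car -> car -> Prop;
  dadd : car -> car -> car;
  dmul : car -> car -> car;
  dzero : car;
  done : car }.
Arguments car : clear implicits.
Arguments deq : clear implicits.
Arguments dadd : clear implicits.
Arguments dmul : clear implicits.
Arguments dzero : clear implicits.
Arguments done : clear implicits.

Definition dle (D : sdioid) (x y : car D) : Prop := deq D (dadd D x y) y.
Arguments dle : clear implicits.

Definition is_sup (D : sdioid) (A : car D -> Prop) (s : car D) : Prop :=
  (forall a, A a -> dle D a s) /\
  (forall u, (forall a, A a -> dle D a u) -> dle D s u).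
Arguments is_sup : clear implicits.

Definition dregular (D : sdioid) (A : car D -> Prop) : Prop :=
  regular (dmul D) (done D) A.
Arguments dregular : clear implicits.

Definition R_morphism (D1 D2 : sdioid) (f : car D1 -> car D2) : Prop :=
  (forall x y, deq D1 x y -> deq D2 (f x) (f y)) /\
  deq D2 (f (dzero D1)) (dzero D2) /\
  deq D2 (f (done D1)) (done D2) /\
  (forall x y, deq D2 (f (dadd D1 x y)) (dadd D2 (f x) (f y))) /\
  (forall x y, deq D2 (f (dmul D1 x y)) (dmul D2 (f x) (f y))) /\
  (forall (A : car D1 -> Prop) (s : car D1), dregular D1 A -> is_sup D1 A s ->
     is_sup D2 (fun y => exists x, A x /\ y = f x) (f s)).

Definition d_injective (D1 D2 : sdioid) (f : car D1 -> car D2) : Prop :=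
  forall x y, deq D2 (f x) (f y) -> deq D1 x y.
Arguments d_injective : clear implicits.
Arguments R_morphism : clear implicits.

Definition is_Rcong (D : sdioid) (R : car D -> car D -> Prop) : Prop :=
  (forall x y, deq D x y -> R x y) /\
  (forall x, R x x) /\
  (forall x y, R x y -> R y x) /\
  (forall x y z, R x y -> R y z -> R x z) /\
  (forall x x' y y', R x x' -> R y y' -> R (dadd D x y) (dadd D x' y')) /\
  (forall x x' y y', R x x' -> R y y' -> R (dmul D x y) (dmul D x' y')) /\
  (forall (A B : car D -> Prop), dregular D A -> dregular D B ->
     (* equal downward closures modulo R *)
     (forall x, (exists a, A a /\ R (dadd D x a) a) <->
                (exists b, B b /\ R (dadd D x b) b)) ->
     forall s t, is_sup D A s -> is_sup D B t -> R s t).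
Arguments is_Rcong : clear implicits.

Definition Delta (k : nat) : Type := ('I_k + 'I_k)%type.
Definition word (k : nat) : Type := seq (Delta k).
Definition lang (k : nat) : Type := word k -> Prop.

Definition regular_lang (k : nat) (L : lang k) : Prop :=
  regular (@cat (Delta k)) (@nil (Delta k)) L.

Definition RegLang (k : nat) : Type := {L : lang k | regular_lang L}.

Definition lzero (k : nat) : lang k := fun _ => False.
Arguments lzero : clear implicits.
Definition lone (k : nat) : lang k := fun w => w = [::].
Arguments lone : clear implicits.
Definition lletter (k : nat) (a : Delta k) : lang k := fun w => w = [:: a].
Definition lunion (k : nat) (L M : lang k) : lang k := fun w => L w \/ M w.
Definition lcat (k : nat) (L M : lang k) : lang k :=
  fun w => exists u v, L u /\ M v /\ w = cat u v.

Lemma reg_lzero k : regular_lang (lzero k).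
Proof. apply: (reg_ext (reg_fin _ _ [::])) => x /=; split => //. Qed.

Lemma reg_lone k : regular_lang (lone k).
Proof.
apply: (reg_ext (reg_fin _ _ [:: [::]])) => x /=; rewrite /lone.
by split; [case=> // <- | move=> ->; left].
Qed.

Lemma reg_lletter k (a : Delta k) : regular_lang (lletter a).
Proof.
apply: (reg_ext (reg_fin _ _ [:: [:: a]])) => x /=; rewrite /lletter.
by split; [case=> // <- | move=> ->; left].
Qed.

Lemma reg_lunion k (L M : lang k) :
  regular_lang L -> regular_lang M -> regular_lang (lunion L M).
Proof. exact: reg_union. Qed.

Lemma reg_lcat k (L M : lang k) :
  regular_lang L -> regular_lang M -> regular_lang (lcat L M).
Proof. exact: reg_prod. Qed.

Definition rzero (k : nat) : RegLang k := exist _ (lzero k) (reg_lzero k).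
Definition rone (k : nat) : RegLang k := exist _ (lone k) (reg_lone k).
Definition rletter (k : nat) (a : Delta k) : RegLang k :=
  exist _ (lletter a) (reg_lletter a).
Definition runion (k : nat) (L M : RegLang k) : RegLang k :=
  exist _ (lunion (proj1_sig L) (proj1_sig M))
          (reg_lunion (proj2_sig L) (proj2_sig M)).
Definition rcat (k : nat) (L M : RegLang k) : RegLang k :=
  exist _ (lcat (proj1_sig L) (proj1_sig M))
          (reg_lcat (proj2_sig L) (proj2_sig M)).

Definition rp (k : nat) (i : 'I_k) : RegLang k := rletter (inl i).
Definition rq (k : nat) (j : 'I_k) : RegLang k := rletter (inr j).

Definition RDelta (k : nat) : sdioid :=
  @SDioid (RegLang k) (fun L M => forall w, proj1_sig L w <-> proj1_sig M w)
          (@runion k) (@rcat k) (rzero k) (rone k).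

Definition rho (k : nat) (L M : RegLang k) : Prop :=
  forall R : RegLang k -> RegLang k -> Prop,
    is_Rcong (RDelta k) R ->
    (forall i j : 'I_k, R (rcat (rp i) (rq j)) (if i == j then rone k else rzero k)) ->
    R L M.

Definition Cprime (k : nat) : sdioid :=
  @SDioid (RegLang k) (@rho k) (@runion k) (@rcat k) (rzero k) (rone k).

(* Main.v *)
Require Import Defs.
From mathcomp Require Import ssreflect ssrfun ssrbool eqtype ssrnat seq fintype.
From Stdlib Require List.
Set Implicit Arguments. Unset Strict Implicit. Unset Printing Implicit Defensive.

Section NF.
Variable k : nat.
Definition NF := (seq 'I_k * seq 'I_k)%type.
Definition mulL (x : Delta k) (n : option NF) : option NF :=
  match n with None => None | Some (u, v) =>
    match x with
    | inr j => Some (j :: u, v)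
    | inl i => match u with [::] => Some ([::], i :: v)
               | j :: u' => if i == j then Some (u', v) else None end
    end end.
Definition nf (w : word k) := foldr mulL (Some ([::], [::])) w.
Definition nfword (n : NF) : word k := map inr n.1 ++ map inl n.2.
Definition act (a y : option NF) :=
  match a with None => None | Some n => foldr mulL y (nfword n) end.

Lemma foldr_None (l : word k) : foldr mulL None l = None.
Proof. by elim: l => //= x l ->. Qed.

Lemma mulL_act x n y : mulL x (act n y) = act (mulL x n) y.
Proof.
case: n => [[u v]|] //=.
case: x => [i|j] //.
case: u => [|j u] //=.
case E: (i == j) => /=; move: (foldr mulL y _) => z; case: z => [[a b]|] //=; by rewrite E.
Qed.

Lemma foldr_act u y : foldr mulL y u = act (nf u) y.
Proof. elim: u => [|x u IH] //=. by rewrite IH mulL_act. Qed.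

Lemma nf_cat u v : nf (u ++ v) = act (nf u) (nf v).
Proof. by rewrite /nf foldr_cat -/(nf v) foldr_act. Qed.

Definition phi (L : lang k) : NF -> Prop := fun n => exists w, L w /\ nf w = Some n.
Definition phiR (L : RegLang k) := phi (proj1_sig L).

Fixpoint sing (w : word k) : RegLang k :=
  match w with [::] => rone k | x :: w' => rcat (rletter x) (sing w') end.

Lemma sing_spec w w' : proj1_sig (sing w) w' <-> w' = w.
Proof.
elim: w w' => [|x w IH] w' /=; first by rewrite /lone.
rewrite /lcat /lletter; split.
- by move=> [u [v [-> [/IH -> ->]]]].
- move=> ->; exists [:: x], w; split => //; split => //; exact/IH.
Qed.

Definition bigU (A : RegLang k -> Prop) : lang k :=
  fun w => exists a, A a /\ proj1_sig a w.

Lemma reg_bigU A : regular (@rcat k) (rone k) A -> regular_lang (bigU A).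
Proof.
elim => {A}.
- elim => [|a l IH].
  + apply: (reg_ext (reg_lzero k)) => w; rewrite /lzero /bigU; split => //.
    by case=> a [].
  + apply: (reg_ext (reg_lunion (proj2_sig a) IH)) => w; rewrite /lunion /bigU /=.
    split.
    * case=> [h|[b [hb hw]]]; [exists a; by split; [left|]|exists b; by split; [right|]].
    * case=> b [[<-|hb] hw]; [by left|right; by exists b].
- move=> A B _ HA _ HB.
  apply: (reg_ext (reg_lunion HA HB)) => w; rewrite /lunion /bigU; split.
  + by case=> [[a [h1 h2]]|[a [h1 h2]]]; exists a; split=> //; [left|right].
  + by case=> a [[h|h] hw]; [left|right]; exists a.
- move=> A B _ HA _ HB.
  apply: (reg_ext (reg_lcat HA HB)) => w; rewrite /lcat /bigU; split.
  + case=> u [v [[a [ha hu]] [[b [hb hv]] ->]]].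
    exists (rcat a b); split; first by exists a, b.
    by exists u, v.
  + case=> c [[a [b [ha [hb ->]]]] [u [v [hu [hv ->]]]]].
    exists u, v; split; first by exists a. split=> //; by exists b.
- move=> A _ HA.
  apply: (reg_ext (reg_star HA)) => w; rewrite /bigU; split.
  + elim=> {w} [|x a _ [c [hc hx]] [b [hb ha]]].
    * by exists (rone k); split; [apply: star_one|].
    * exists (rcat c b); split; first exact: star_mul.
      by exists x, a.
  + case=> c [hc]; elim: hc w => {c} [|x a _ IH ha] w /=.
    * rewrite /lone => ->; exact: star_one.
    * case=> u [v [hu [hv ->]]].
      apply: star_mul; first exact: IH.
      by exists a.
- move=> A B _ HA HAB.
  apply: (reg_ext HA) => w; rewrite /bigU; split; case=> a [h1 h2]; exists a;
    split => //; by apply/HAB.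
Qed.
End NF.
Arguments sing {k} w.
Arguments nf {k} w.
Arguments nfword {k} n.
Arguments act {k} a y.
Arguments phi {k} L n.
Arguments phiR {k} L n.
Arguments mulL {k} x n.
Arguments bigU {k} A w.

Section Rho.
Variable k : nat.
Implicit Types L M : RegLang k.

Definition keq L M := forall n, phiR L n <-> phiR M n.

Lemma phi_rcat L M n :
  phiR (rcat L M) n <-> exists a b, phiR L a /\ phiR M b /\ act (Some a) (Some b) = Some n.
Proof.
rewrite /phiR /phi /=; split.
- case=> w [[u [v [hu [hv ->]]]]]; rewrite nf_cat.
  case Eu: (nf u) => [a|] //=; case Ev: (nf v) => [b|] //=; last by rewrite foldr_None.
  move=> h; exists a, b; split; first by exists u.
  split; first by exists v. done.
- case=> a [b [[u [hu Eu]] [[v [hv Ev]] h]]].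
  exists (u ++ v); split; first by exists u, v.
  by rewrite nf_cat Eu Ev.
Qed.

Lemma phi_runion L M n : phiR (runion L M) n <-> phiR L n \/ phiR M n.
Proof.
rewrite /phiR /phi /= /lunion; split.
- by case=> w [[h|h] e]; [left|right]; exists w.
- by case=> [[w [h e]]|[w [h e]]]; exists w; split => //; [left|right].
Qed.

Lemma phi_rone n : phiR (rone k) n <-> n = ([::], [::]).
Proof.
rewrite /phiR /phi /= /lone; split.
- by case=> w [-> [<-]].
- by move=> ->; exists [::].
Qed.

Lemma phi_rzero n : phiR (rzero k) n <-> False.
Proof. rewrite /phiR /phi /= /lzero; split => //; by case=> w []. Qed.

Lemma phi_deq L M : deq (RDelta k) L M -> keq L M.
Proof. move=> h n; rewrite /phiR /phi; split; case=> w [hw e]; exists w; split => //; exact/h. Qed.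

Lemma phi_lang_sub L M : (forall w, proj1_sig L w -> proj1_sig M w) ->
  forall n, phiR L n -> phiR M n.
Proof. move=> h n [w [hw e]]; exists w; split => //; exact: h. Qed.

Lemma sup_sub (A : RegLang k -> Prop) s : dregular (RDelta k) A -> is_sup (RDelta k) A s ->
  forall w, proj1_sig s w -> bigU A w.
Proof.
move=> hA [_ hs] w hw.
have hU := reg_bigU hA.
pose U : RegLang k := exist _ (bigU A) hU.
have := hs U; rewrite /dle /=; move=> h.
have h2 : forall a, A a -> forall w, lunion (proj1_sig a) (bigU A) w <-> bigU A w.
  move=> a ha w'; rewrite /lunion; split; last by right.
  by case=> // hw'; exists a.
have := h h2 w; rewrite /lunion => [[H1 _]]; apply: H1; by left.
Qed.

Lemma sup_ub (A : RegLang k -> Prop) s : is_sup (RDelta k) A s ->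
  forall a w, A a -> proj1_sig a w -> proj1_sig s w.
Proof. move=> [h _] a w ha hw; have := h a ha w; rewrite /= /lunion => [[H _]]; apply: H; by left. Qed.

Lemma keq_sym L M : keq L M -> keq M L.
Proof. move=> h n; by split => /h. Qed.

Lemma ker_sup_half (A B : RegLang k -> Prop) s t :
  dregular (RDelta k) A ->
  (forall x, (exists a, A a /\ keq (runion x a) a) -> (exists b, B b /\ keq (runion x b) b)) ->
  is_sup (RDelta k) A s -> is_sup (RDelta k) B t -> forall n, phiR s n -> phiR t n.
Proof.
move=> hA hd hs ht n [w [hw e]].
case: (sup_sub hA hs hw) => a [ha hwa].
have [b [hb hab]] : exists b, B b /\ keq (runion a b) b.
  apply: hd; exists a; split => // n'; rewrite phi_runion; split; [by case|by left].
have : phiR b n by apply/hab; apply/phi_runion; left; exists w.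
case=> w' [hw' e']; exists w'; split => //; exact: (sup_ub ht hb).
Qed.

Lemma ker_cong : is_Rcong (RDelta k) keq.
Proof.
split; first exact: phi_deq.
split; first by [].
split; first exact: keq_sym.
split; first by move=> x y z h1 h2 n; rewrite h1 h2.
split.
  move=> x x' y y' h1 h2 n; rewrite !phi_runion h1 h2; done.
split.
  move=> x x' y y' h1 h2 n; rewrite !phi_rcat; split;
  case=> a [b [ha [hb e]]]; exists a, b; (split; [exact/h1|split; [exact/h2|done]]).
move=> A B hA hB hd s t hs ht n; split.
- apply: (ker_sup_half hA _ hs ht) => x; by case: (hd x).
- apply: (ker_sup_half hB _ ht hs) => x; by case: (hd x).
Qed.

Lemma phi_rel (i j : 'I_k) : keq (rcat (rp i) (rq j)) (if i == j then rone k else rzero k).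
Proof.
move=> n; rewrite phi_rcat; split.
- case=> a [b [[w [hw e]] [[w' [hw' e']] h]]].
  move: hw hw' e e'; rewrite /= /lletter => -> -> /= [ea] [eb]; subst a b.
  move: h => /=; case: eqP => [ij|ne] // [en]; subst n.
  by apply/phi_rone.
- case: eqP => [<-|ne]; last by move/phi_rzero.
  move/phi_rone => ->; exists ([::], [:: i]), ([:: i], [::]).
  split; first by exists [:: inl i]. split; first by exists [:: inr i].
  by rewrite /= eqxx.
Qed.

Lemma rho_keq L M : rho L M -> keq L M.
Proof. move=> h; apply: h; [exact: ker_cong|exact: phi_rel]. Qed.
End Rho.

Section Rho2.
Variable k : nat.
Implicit Types L M : RegLang k.
Implicit Types u v w : word k.
Local Notation D := (RDelta k).

Lemma sing_cat u v : deq D (rcat (sing u) (sing v)) (sing (u ++ v)).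
Proof.
move=> w /=; rewrite sing_spec /lcat; split.
- by case=> a [b [/sing_spec -> [/sing_spec -> ->]]].
- move=> ->; exists u, v; split; first exact/sing_spec. split; first exact/sing_spec. done.
Qed.

Lemma sing_in w w' : proj1_sig (sing w) w' -> w' = w.
Proof. by move/sing_spec. Qed.

Lemma reg_sing_family (L : lang k) : regular_lang L ->
  exists A : RegLang k -> Prop, regular (@rcat k) (rone k) A /\
    (forall a, A a -> exists w, L w /\ deq D a (sing w)) /\
    (forall w, L w -> exists a, A a /\ deq D a (sing w)).
Proof.
elim => {L}.
- move=> l; exists (fun a => List.In a (List.map sing l)); split; first exact: reg_fin.
  split.
  + move=> a /List.in_map_iff [w [<- hw]]; by exists w.
  + move=> w hw; exists (sing w); split => //; exact: List.in_map.
- move=> L M _ [A [hA [h1 h2]]] _ [B [hB [g1 g2]]].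
  exists (fun a => A a \/ B a); split; first exact: reg_union.
  split.
  + move=> a [/h1|/g1] [w [hw e]]; exists w; split => //; by [left|right].
  + move=> w [/h2|/g2] [a [ha e]]; exists a; split => //; by [left|right].
- move=> L M _ [A [hA [h1 h2]]] _ [B [hB [g1 g2]]].
  exists (fun x => exists a b, A a /\ B b /\ x = rcat a b); split; first exact: reg_prod.
  split.
  + move=> x [a [b [ha [hb ->]]]].
    case: (h1 a ha) => u [hu eu]; case: (g1 b hb) => v [hv ev].
    exists (u ++ v); split; first by exists u, v.
    move=> w; rewrite -(sing_cat u v w) /= /lcat; split;
      case=> u' [v' [p [q ->]]]; exists u', v'; (split; [exact/eu|split; [exact/ev|done]]).
  + move=> w [u [v [hu [hv ->]]]].
    case: (h2 u hu) => a [ha eu]; case: (g2 v hv) => b [hb ev].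
    exists (rcat a b); split; first by exists a, b.
    move=> w'; rewrite -(sing_cat u v w') /= /lcat; split;
      case=> u' [v' [p [q ->]]]; exists u', v'; (split; [exact/eu|split; [exact/ev|done]]).
- move=> L _ [A [hA [h1 h2]]].
  exists (star (@rcat k) (rone k) A); split; first exact: reg_star.
  split.
  + move=> a; elim => {a} [|x a _ [u [hu eu]] ha].
    * exists [::]; split; first exact: star_one. by [].
    * case: (h1 a ha) => v [hv ev].
      exists (u ++ v); split; first exact: star_mul.
      move=> w; rewrite -(sing_cat u v w) /= /lcat; split;
        case=> u' [v' [p [q ->]]]; exists u', v'; (split; [exact/eu|split; [exact/ev|done]]).
  + move=> w; elim => {w} [|u v _ [x [hx eu]] hv].
    * exists (rone k); split; first exact: star_one. by [].
    * case: (h2 v hv) => a [ha ev].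
      exists (rcat x a); split; first exact: star_mul.
      move=> w; rewrite -(sing_cat u v w) /= /lcat; split;
        case=> u' [v' [p [q ->]]]; exists u', v'; (split; [exact/eu|split; [exact/ev|done]]).
- move=> L M _ [A [hA [h1 h2]]] e.
  exists A; split => //; split.
  + move=> a /h1 [w [hw ew]]; exists w; split => //; exact/e.
  + move=> w /e /h2 //.
Qed.

Definition snf (w : word k) : RegLang k :=
  match nf w with None => rzero k | Some n => sing (nfword n) end.

Variable R : RegLang k -> RegLang k -> Prop.
Hypothesis HR : is_Rcong D R.
Hypothesis Hrel : forall i j : 'I_k, R (rcat (rp i) (rq j)) (if i == j then rone k else rzero k).

Let Hdeq : forall x y, deq D x y -> R x y. Proof. by case: HR. Qed.
Let Hrefl : forall x, R x x. Proof. by case: HR => _ []. Qed.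
Let Hsym : forall x y, R x y -> R y x. Proof. by case: HR => _ [_ []]. Qed.
Let Htrans : forall x y z, R x y -> R y z -> R x z. Proof. by case: HR => _ [_ [_ []]]. Qed.
Let Hadd : forall x x' y y', R x x' -> R y y' -> R (runion x y) (runion x' y').
Proof. by case: HR => _ [_ [_ [_ []]]]. Qed.
Let Hmul : forall x x' y y', R x x' -> R y y' -> R (rcat x y) (rcat x' y').
Proof. by case: HR => _ [_ [_ [_ [_ []]]]]. Qed.
Let Hsup := proj2 (proj2 (proj2 (proj2 (proj2 (proj2 HR))))).

Lemma S1 w : R (sing w) (snf w).
Proof.
elim: w => [|x w IH]; first exact: Hrefl.
apply: (Htrans (y := rcat (rletter x) (snf w))); first exact: Hmul.
rewrite /snf /= -/(nf w).
case E: (nf w) => [[u v]|] /=; last first.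
  apply: Hdeq => w' /=; rewrite /lcat /lzero; split => //; by case=> ? [? [? []]].
case: x => [i|j]; last exact: Hrefl.
case: u E => [|j u] E; first exact: Hrefl.
rewrite /nfword /=.
set S := sing _.
apply: (Htrans (y := rcat (rcat (rp i) (rq j)) S)).
  apply: Hdeq => w' /=; rewrite /lcat; split.
  - case=> a [b [ha [[c [d [hc [hd ->]]]] ->]]].
    exists (a ++ c), d; split; last by rewrite catA.
    by exists a, c.
  - case=> a [b [[c [d [hc [hd ->]]]] [hb ->]]].
    exists c, (d ++ b); split => //; split; last by rewrite catA.
    by exists d, b.
apply: (Htrans (y := rcat (if i == j then rone k else rzero k) S)).
  apply: Hmul => //; exact: Hrefl.
case: (i == j); apply: Hdeq => w' /=; rewrite /lcat /lone /lzero; split.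
- by case=> a [b [-> [hb ->]]].
- by move=> h; exists [::], w'.
- by case=> a [b [[]]].
- by [].
Qed.

Lemma keq_rho_half L M (A B : RegLang k -> Prop) :
  (forall n, phiR L n -> phiR M n) ->
  (forall a, A a -> exists w, proj1_sig L w /\ deq D a (sing w)) ->
  (forall w, proj1_sig M w -> exists b, B b /\ deq D b (sing w)) ->
  forall z, (exists a, (A a \/ List.In a [:: rzero k]) /\ R (runion z a) a) ->
            (exists b, (B b \/ List.In b [:: rzero k]) /\ R (runion z b) b).
Proof.
move=> hLM hA hB z [a [[ha|[<-|[]]] hz]]; last first.
  by exists (rzero k); split => //; right; left.
case: (hA a ha) => w [hw ew].
have haw : R a (snf w) by apply: Htrans (S1 w); exact: Hdeq.
move: haw; rewrite /snf; case E: (nf w) => [n|] haw.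
- have [w' [hw' e']] : phiR M n by apply: hLM; exists w.
  case: (hB w' hw') => b [hb eb].
  have hba : R b a.
    apply: (Htrans (y := sing w')); first exact: Hdeq.
    apply: (Htrans (y := snf w')); first exact: S1.
    by rewrite /snf e'; apply: Hsym.
  exists b; split; first by left.
  apply: (Htrans (y := runion z a)); first by apply: Hadd; [exact: Hrefl|exact: hba].
  apply: Htrans hz _; exact: Hsym.
- exists (rzero k); split; first by right; left.
  apply: (Htrans (y := runion z a)); last exact: Htrans hz haw.
  apply: Hadd; [exact: Hrefl| exact: Hsym].
Qed.

Lemma sup_family (L : RegLang k) (A : RegLang k -> Prop) :
  (forall a, A a -> exists w, proj1_sig L w /\ deq D a (sing w)) ->
  (forall w, proj1_sig L w -> exists a, A a /\ deq D a (sing w)) ->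
  is_sup D (fun a => A a \/ List.In a [:: rzero k]) L.
Proof.
move=> h1 h2; split.
- move=> a [ha|[<-|[]]] w /=; rewrite /lunion; split.
  + case => // hw'. case: (h1 a ha) => w0 [hw0 e0].
    by have := proj1 (e0 w) hw' => /sing_spec ->.
  + by right.
  + by case.
  + by right.
- move=> u hu w /=; rewrite /lunion; split; last by right.
  case=> // hw; case: (h2 w hw) => a [ha ea].
  have := hu a (or_introl ha) w; rewrite /= /lunion => [[H _]]; apply: H; left.
  apply/ea; exact/sing_spec.
Qed.
End Rho2.

Lemma keq_rho k (L M : RegLang k) : keq L M -> rho L M.
Proof.
move=> h R HR Hrel.
case: (reg_sing_family (proj2_sig L)) => A [hA [a1 a2]].
case: (reg_sing_family (proj2_sig M)) => B [hB [b1 b2]].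
have Hsup := proj2 (proj2 (proj2 (proj2 (proj2 (proj2 HR))))).
apply: (Hsup (fun a => A a \/ List.In a [:: rzero k]) (fun b => B b \/ List.In b [:: rzero k])).
- exact: (reg_union hA (reg_fin _ _ _)).
- exact: (reg_union hB (reg_fin _ _ _)).
- move=> z; split.
  + apply: (keq_rho_half HR Hrel (L := L) (M := M)) => // n; by move/h.
  + apply: (keq_rho_half HR Hrel (L := M) (M := L)) => // n; by move/h.
- exact: sup_family.
- exact: sup_family.
Qed.

Lemma rho_iff k (L M : RegLang k) : rho L M <-> keq L M.
Proof. split; [exact: rho_keq|exact: keq_rho]. Qed.

Definition o0 : 'I_2 := ord0.
Definition o1 : 'I_2 := @Ordinal 2 1 isT.

Section Enc.
Variable m : nat.
Definition encq (j : 'I_m) : seq 'I_2 := o1 :: nseq j o0 ++ [:: o1].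
Definition enc (x : Delta m) : word 2 :=
  match x with inl i => map inl (encq i) | inr j => map inr (encq j) end.
Definition encw (w : word m) : word 2 := flatten (map enc w).
Definition encN (n : NF m) : NF 2 := (flatten (map encq n.1), flatten (map encq n.2)).

Lemma encw_cat u v : encw (u ++ v) = encw u ++ encw v.
Proof. by rewrite /encw map_cat flatten_cat. Qed.

Lemma foldr_inr (l U V : seq 'I_2) :
  foldr mulL (Some (U, V)) (map inr l) = Some (l ++ U, V).
Proof. by elim: l => //= x l ->. Qed.

Lemma foldr_inl (l V : seq 'I_2) :
  foldr mulL (Some ([::], V)) (map inl l) = Some ([::], l ++ V).
Proof. by elim: l => //= x l ->. Qed.

Lemma foldr_Z (i j : nat) (U V : seq 'I_2) :
  foldr mulL (Some (nseq j o0 ++ o1 :: U, V)) (map inl (nseq i o0)) =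
  if i <= j then Some (nseq (j - i) o0 ++ o1 :: U, V) else None.
Proof.
elim: i => [|i IH]; first by rewrite subn0.
rewrite /= IH.
case: (ltngtP i j) => h.
- have -> : j - i = (j - i.+1).+1 by rewrite subnSK.
  by [].
- by [].
- by rewrite h subnn.
Qed.

Lemma nf_catF k (a b : word k) : nf (a ++ b) = foldr mulL (nf b) a.
Proof. by rewrite /nf foldr_cat. Qed.

Lemma nf_enc w : nf (encw w) = omap encN (nf w).
Proof.
elim: w => [|x w IH] //.
rewrite (_ : encw (x :: w) = enc x ++ encw w) // nf_catF IH.
rewrite (_ : nf (x :: w) = mulL x (nf w)) //.
case: (nf w) => [[u v]|] /=; last by rewrite foldr_None.
case: x => [i|j] /=; last by rewrite foldr_inr.
case: u => [|j u] /=; first by rewrite foldr_inl.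
rewrite /encq /= map_cat foldr_cat /= -catA cat1s foldr_Z.
case: (ltngtP i j) => h.
- have -> : j - i = (j - i.+1).+1 by rewrite subnSK.
  have -> : (i == j) = false by apply/eqP => e; rewrite e ltnn in h.
  by [].
- by have -> : (i == j) = false by apply/eqP => e; rewrite e ltnn in h.
- have e : i = j by apply: ord_inj.
  by rewrite e eqxx subnn /=.
Qed.
End Enc.

Section G.
Variable m : nat.
Definition img (L : lang m) : lang 2 := fun w' => exists w, L w /\ w' = encw w.

Lemma reg_image (L : lang m) : regular_lang L -> regular_lang (img L).
Proof.
elim => {L}.
- move=> l; apply: (reg_ext (reg_fin _ _ (List.map (@encw m) l))) => w'.
  rewrite /img List.in_map_iff; split; case=> w [h1 h2]; by exists w.
- move=> L M _ HL _ HM; apply: (reg_ext (reg_lunion HL HM)) => w'.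
  rewrite /img /lunion; split.
  + by case=> [[w [h ->]]|[w [h ->]]]; exists w; split => //; [left|right].
  + by case=> w [[h|h] ->]; [left|right]; exists w.
- move=> L M _ HL _ HM; apply: (reg_ext (reg_lcat HL HM)) => w'.
  rewrite /img /lcat; split.
  + case=> a [b [[u [hu ->]] [[v [hv ->]] ->]]].
    exists (u ++ v); split; first by exists u, v.
    by rewrite encw_cat.
  + case=> w [[u [v [hu [hv ->]]]] ->].
    exists (encw u), (encw v); split; first by exists u.
    split; first by exists v. by rewrite encw_cat.
- move=> L _ HL; apply: (reg_ext (reg_star HL)) => w'.
  rewrite /img; split.
  + elim => {w'} [|x a _ [u [hu ->]] [v [hv ->]]].
    * exists [::]; split => //; exact: star_one.
    * exists (u ++ v); split; first exact: star_mul.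
      by rewrite encw_cat.
  + case=> w [hw ->]; elim: hw => {w} [|u a _ IH ha]; first exact: star_one.
    rewrite encw_cat; apply: star_mul => //; by exists a.
- move=> L M _ HL e; apply: (reg_ext HL) => w'.
  rewrite /img; split; case=> w [h1 h2]; exists w; split => //; exact/e.
Qed.

Definition g (L : RegLang m) : RegLang 2 :=
  exist _ (img (proj1_sig L)) (reg_image (proj2_sig L)).

Lemma phi_g L n : phiR (g L) n <-> exists n0, phiR L n0 /\ n = encN n0.
Proof.
rewrite /phiR /phi /= /img; split.
- case=> w' [[w [hw ->]]]; rewrite nf_enc.
  case E: (nf w) => [n0|] //= [<-]; exists n0; split => //; by exists w.
- case=> n0 [[w [hw e]] ->]; exists (encw w); split; first by exists w.
  by rewrite nf_enc e.
Qed.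

Lemma nseq_inj (a b : nat) (r r' : seq 'I_2) :
  nseq a o0 ++ o1 :: r = nseq b o0 ++ o1 :: r' -> a = b /\ r = r'.
Proof.
elim: a b => [|a IH] [|b] //=.
- by case.
by case=> /IH [-> ->].
Qed.

Lemma flat_inj (u u' : seq 'I_m) :
  flatten (map (@encq m) u) = flatten (map (@encq m) u') -> u = u'.
Proof.
elim: u u' => [|x u IH] [|y u'] //=.
rewrite /encq /= -!catA !cat1s; case=> /nseq_inj [e /IH ->].
by rewrite (ord_inj e).
Qed.

Lemma encN_inj (a b : NF m) : encN a = encN b -> a = b.
Proof.
case: a b => [u v] [u' v'] /= [/flat_inj -> /flat_inj ->]; done.
Qed.

Lemma keq_g L M : keq L M -> keq (g L) (g M).
Proof.
move=> h n; rewrite !phi_g; split; case=> n0 [h1 h2]; exists n0; split => //; exact/h.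
Qed.

Lemma g_keq L M : keq (g L) (g M) -> keq L M.
Proof.
move=> h n; split => hn.
- have : phiR (g M) (encN n) by apply/h; apply/phi_g; exists n.
  by case/phi_g => n0 [h1 /encN_inj ->].
- have : phiR (g L) (encN n) by apply/h; apply/phi_g; exists n.
  by case/phi_g => n0 [h1 /encN_inj ->].
Qed.
End G.

Lemma deq_rho k (L M : RegLang k) : deq (RDelta k) L M -> rho L M.
Proof. by move=> h; apply: keq_rho; apply: phi_deq. Qed.

Lemma keq_trans k (x y z : RegLang k) : keq x y -> keq y z -> keq x z.
Proof. by move=> h1 h2 n; rewrite h1 h2. Qed.

Lemma dle_C k (x y : RegLang k) : dle (Cprime k) x y <-> (forall n, phiR x n -> phiR y n).
Proof.
rewrite /dle /= rho_iff; split.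
- by move=> h n hx; apply/h; apply/phi_runion; left.
- move=> h n; rewrite phi_runion; split; last by right.
  by case=> // /h.
Qed.

Lemma phi_letter k (a : Delta k) n : phiR (rletter a) n <-> nf [:: a] = Some n.
Proof.
rewrite /phiR /phi /= /lletter; split; first by case=> w [e1 e2]; subst w.
by move=> h; exists [:: a].
Qed.

Section Main.
Variable m : nat.

Lemma g_cat (x y : RegLang m) : deq (RDelta 2) (g (rcat x y)) (rcat (g x) (g y)).
Proof.
move=> w' /=; rewrite /img /lcat; split.
- case=> w [[u [v [hu [hv ->]]]] ->].
  exists (encw u), (encw v); split; first by exists u.
  split; first by exists v. by rewrite encw_cat.
- case=> a [b [[u [hu ->]] [[v [hv ->]] ->]]].
  exists (u ++ v); split; first by exists u, v.
  by rewrite encw_cat.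
Qed.

Lemma g_R : R_morphism (Cprime m) (Cprime 2) (@g m).
Proof.
split.
  by move=> x y /rho_iff h; apply/rho_iff; apply: keq_g.
split.
  apply: deq_rho => w /=; rewrite /img /lzero; split => //; by case=> ? [].
split.
  apply: deq_rho => w /=; rewrite /img /lone; split; first by case=> ? [-> ->].
  by move=> ->; exists [::].
split.
  move=> x y; apply: deq_rho => w /=; rewrite /img /lunion; split.
  + by case=> w0 [[h|h] ->]; [left|right]; exists w0.
  + by case=> [[w0 [h ->]]|[w0 [h ->]]]; exists w0; split => //; [left|right].
split.
  move=> x y; apply: deq_rho; exact: g_cat.
move=> A s hA hs.
pose U : RegLang m := exist _ (bigU A) (reg_bigU hA).
have hsU : forall n, phiR s n -> phiR U n.
  apply/dle_C; apply: (proj2 hs) => a ha; apply/dle_C.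
  apply: phi_lang_sub => w hw; by exists a.
split.
- move=> y [x [hx ->]]; apply/dle_C => n /phi_g [n0 [h ->]].
  apply/phi_g; exists n0; split => //.
  exact: (proj1 (dle_C _ _) (proj1 hs x hx)).
- move=> u hu; apply/dle_C => n /phi_g [n0 [h0 ->]].
  case: (hsU n0 h0) => w [[a [ha hwa]] e].
  apply: (proj1 (dle_C _ _) (hu (g a) (ex_intro _ a (conj ha erefl)))).
  apply/phi_g; exists n0; split => //; by exists w.
Qed.

Lemma g_inj : d_injective (Cprime m) (Cprime 2) (@g m).
Proof. by move=> x y /rho_iff h; apply/rho_iff; apply: g_keq. Qed.

Lemma g_rel1 (i j : 'I_m) :
  rho (rcat (g (rp i)) (g (rq j))) (if i == j then rone 2 else rzero 2).
Proof.
apply/rho_iff.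
apply: (keq_trans (y := g (rcat (rp i) (rq j)))).
  apply: keq_sym; apply: phi_deq; exact: g_cat.
apply: (keq_trans (y := g (if i == j then rone m else rzero m))).
  apply: keq_g; exact: phi_rel.
case: (i == j); apply: phi_deq => w /=; rewrite /img.
- rewrite /lone; split; first by case=> ? [-> ->].
  by move=> ->; exists [::].
- rewrite /lzero; split => //; by case=> ? [].
Qed.

Lemma g_rel2 (j : 'I_m) : rho (rcat (rp (ord0 : 'I_2)) (g (rq j))) (rzero 2).
Proof.
apply/rho_iff => n; rewrite phi_rzero phi_rcat; split => //.
case=> a [b [/phi_letter /= [<-] [/phi_g [n0 [/phi_letter /= [<-] ->]] ]]].
by [].
Qed.

Lemma g_rel3 (i : 'I_m) : rho (rcat (g (rp i)) (rq (ord0 : 'I_2))) (rzero 2).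
Proof.
apply/rho_iff => n; rewrite phi_rzero phi_rcat; split => //.
case=> a [b [/phi_g [n0 [/phi_letter /= [<-] ->]] [/phi_letter /= [<-]]]].
rewrite /= /nfword /= cats0 /encq /= map_cat foldr_cat /= foldr_None.
by [].
Qed.
End Main.

Theorem lemma1 (m : nat) (hm : (2 <= m)%N) :
  exists g : RegLang m -> RegLang 2,
    R_morphism (Cprime m) (Cprime 2) g /\
    d_injective (Cprime m) (Cprime 2) g /\
    (forall i j : 'I_m,
       rho (rcat (g (rp i)) (g (rq j))) (if i == j then rone 2 else rzero 2) /\
       rho (rcat (rp (ord0 : 'I_2)) (g (rq j))) (rzero 2) /\
       rho (rcat (g (rp i)) (rq (ord0 : 'I_2))) (rzero 2)).
Proof.
exists (@g m); split; first exact: g_R.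
split; first exact: g_inj.
move=> i j; split; first exact: g_rel1.
split; [exact: g_rel2|exact: g_rel3].
Qed.
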